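(* Let $\theta$ be a linear operator on $\Lambda$ that is shift-invariant, i.e. $E^a\theta=\theta E^a$ for all $a\in\mathbb C$. Then $$\theta=\sum_{\lambda\in\mathcal P}\big(\epsilon\,\theta\, m_\lambda(\mathbf y)\big)\,\mathbf D_\lambda,$$ meaning that $\theta p=\sum_{\lambda}(\epsilon\,\theta\, m_\lambda)\,\mathbf D_\lambda p$ for all $p\in\Lambda$.
   Context: $\Lambda$ is the algebra of complex symmetric functions in $\mathbf y=(y_1,y_2,\dots)$. $\mathcal P$ is the set of all partitions and $m_\lambda$ is the monomial symmetric function. $\mathbf D_i$ ($i\ge1$) is the linear operator with $\mathbf D_im_\lambda=i!\,m_{\lambda\setminus i}$ if $i$ is a part of $\lambda$ (one part $i$ removed), and $0$ otherwise. $\mathbf D_\lambda=\prod_{i:\lambda_i>0}\mathbf D_{\lambda_i}/\lambda_i!$, with $\mathbf D_\emptyset$ the identity. These operators commute. $E^ap(y_1,\dots)=p(a,y_1,\dots)$ and $\epsilon p=p(0,0,\dots)$. The sum acts finitely on each $p$. *)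

(* Defs.v *)
From mathcomp Require Import all_boot all_algebra.
From mathcomp Require Import mpoly.
From mathcomp Require Import complex.
From mathcomp Require Import Rstruct.

Set Implicit Arguments.
Unset Strict Implicit.
Unset Printing Implicit Defensive.
Import GRing.Theory.
Local Open Scope ring_scope.

Definition CC : fieldType := (Rdefinitions.R)[i].

(* A symmetric function in y = (y_1, y_2, ...) is represented, as usual, by
   the compatible family of its restrictions p_n = p(y_1,...,y_n,0,0,...) in
   {mpoly CC[n]}.  [fam] is the type of raw families; [isSym] carves out Λ. *)
Definition fam := forall n : nat, {mpoly CC[n]}.

Definition drop_last (n : nat) (q : {mpoly CC[n.+1]}) : {mpoly CC[n]} :=
  q \mPo [tuple (if unlift ord_max i is Some j then 'X_j else 0) | i < n.+1].

Definition famD (p q : fam) : fam := fun n => p n + q n.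
Definition famZ (c : CC) (p : fam) : fam := fun n => c *: p n.
Definition fam0 : fam := fun n => 0.

Definition isSym (p : fam) : Prop :=
  [/\ forall n, p n \is symmetric,
      forall n, drop_last (p n.+1) = p n
    & exists d : nat, forall n (m : 'X_{1..n}), m \in msupp (p n) -> (mdeg m <= d)%N].

Definition deg_le (p : fam) (d : nat) : Prop :=
  forall n (m : 'X_{1..n}), m \in msupp (p n) -> (mdeg m <= d)%N.

(* E^a p (y_1, y_2, ...) = p(a, y_1, y_2, ...) *)
Definition shiftE (a : CC) (p : fam) : fam := fun n =>
  p n.+1 \mPo [tuple (if unlift ord0 i is Some j then 'X_j else a%:MP) | i < n.+1].

Definition epsilon (p : fam) : CC := (p 0%N).@[fun _ => 0].

(* Partitions are represented as nonincreasing sequences of positive parts.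
   The partition (shape) of a monomial: its nonzero exponents, sorted. *)
Definition mpart (n : nat) (m : 'X_{1..n}) : seq nat :=
  sort geq [seq m i | i <- enum 'I_n & (m i != 0)%N].

Definition monomial_sym (la : seq nat) : fam := fun n =>
  \sum_(m : 'X_{1..n < (sumn la).+1} | mpart m == la) 'X_[bmnm m].

Definition mpad (n : nat) (la : seq nat) : 'X_{1..n} :=
  [multinom nth 0%N la i | i < n].

(* D_i : D_i m_λ = i! m_{λ \ i} if i is a part of λ, 0 otherwise, extended
   linearly.  On the n-th component: expand p_{n+1} in the monomial basis
   p_{n+1} = Σ_λ c_λ m_λ (c_λ = coefficient of y^λ) and apply the rule. *)
Definition Dop (i : nat) (p : fam) : fam := fun n =>
  \sum_(la <- undup [seq mpart m | m <- msupp (p n.+1)])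
     (p n.+1)@_(mpad n.+1 la) *:
        (if i \in la then (i`!)%:R *: monomial_sym (rem i la) n else 0).

Definition Dpart (la : seq nat) (p : fam) : fam :=
  foldr (fun k q => famZ ((k`!)%:R)^-1 (Dop k q)) p la.

Definition partitions_upto (N : nat) : seq (seq nat) :=
  undup [seq mpart (bmnm m) | m : 'X_{1..N < N.+1}].

(* Main.v *)
Require Import Defs.
From mathcomp Require Import all_boot all_algebra.
From mathcomp Require Import mpoly complex Rstruct perm.
From Stdlib Require Import FunctionalExtensionality.
From mathcomp Require Import ring.
Import GRing.Theory Num.Theory.
Local Open Scope ring_scope.
Set Implicit Arguments.
Unset Strict Implicit.
Unset Printing Implicit Defensive.
Lemma geq_totalR : total geq.
Proof. by move=> x y; rewrite /geq /= orbC leq_total. Qed.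
Lemma geq_transR : transitive geq.
Proof. by move=> y x z /= h1 h2; exact: leq_trans h2 h1. Qed.
Lemma geq_antiR : antisymmetric geq.
Proof. by move=> x y /= h; apply: anti_leq; rewrite andbC. Qed.

Definition isPart (la : seq nat) := sorted geq la && all (fun k => 0 < k)%N la.
Definition cf (p : fam) (la : seq nat) : CC := (p (size la))@_(mpad (size la) la).
Definition ins (k : nat) (s : seq nat) := sort geq (k :: s).

Lemma sort_perm_eq (s1 s2 : seq nat) : perm_eq s1 s2 -> sort geq s1 = sort geq s2.
Proof. by move/(perm_sortP geq_totalR geq_transR geq_antiR). Qed.

Lemma sorted_perm_eq (s1 s2 : seq nat) : sorted geq s1 -> sorted geq s2 -> perm_eq s1 s2 -> s1 = s2.
Proof. exact: (sorted_eq geq_transR geq_antiR). Qed.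

Lemma mpartE n (m : 'X_{1..n}) :
  mpart m = sort geq [seq x <- (multinom_val m : seq nat) | x != 0%N].
Proof.
rewrite /mpart; congr sort.
by rewrite -[in RHS](map_tnth_enum (multinom_val m)) [in RHS]filter_map.
Qed.

Lemma isPart_sort (s : seq nat) : all (fun k => 0 < k)%N s -> isPart (sort geq s).
Proof.
move=> h; rewrite /isPart sort_sorted ?all_sort //; exact: geq_totalR.
Qed.

Lemma mpart_isPart n (m : 'X_{1..n}) : isPart (mpart m).
Proof.
rewrite mpartE isPart_sort //; apply/allP=> x; rewrite mem_filter lt0n.
by case/andP.
Qed.

Lemma isPart_ins k s : (0 < k)%N -> isPart s -> isPart (ins k s).
Proof. by move=> k0 /andP[_ h]; apply: isPart_sort; rewrite /= k0. Qed.

Lemma mpart_perm n1 n2 (m1 : 'X_{1..n1}) (m2 : 'X_{1..n2}) :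
  perm_eq [seq x <- (multinom_val m1 : seq nat) | x != 0%N]
          [seq x <- (multinom_val m2 : seq nat) | x != 0%N] -> mpart m1 = mpart m2.
Proof. by rewrite !mpartE => /sort_perm_eq. Qed.

Lemma sumn_mpart n (m : 'X_{1..n}) : sumn (mpart m) = mdeg m.
Proof.
rewrite mpartE (perm_sumn (permEl (perm_sort _ _))) /mdeg sumnE.
rewrite big_filter big_mkcond /=; apply: eq_bigr => i _.
by case: eqP.
Qed.

Lemma size_mpart n (m : 'X_{1..n}) : (size (mpart m) <= n)%N.
Proof.
rewrite mpartE size_sort size_filter.
by rewrite (leq_trans (count_size _ _)) // size_tuple.
Qed.
Lemma mpad_val n la : (size la <= n)%N ->
  (multinom_val (mpad n la) : seq nat) = la ++ nseq (n - size la) 0%N.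
Proof.
move=> hs; apply: (@eq_from_nth _ 0%N).
  by rewrite size_tuple size_cat size_nseq subnKC.
move=> i; rewrite size_tuple => lti.
have -> : nth 0%N (multinom_val (mpad n la)) i = nth 0%N la i.
  by rewrite /mpad /= (nth_mktuple _ _ (Ordinal lti)).
rewrite nth_cat; case: ltnP => // hi.
by rewrite nth_nseq nth_default // if_same.
Qed.

Lemma filter_nz_part la : isPart la -> [seq x <- la | x != 0%N] = la.
Proof.
case/andP=> _ h; apply/all_filterP; apply: sub_all h => x; by rewrite lt0n.
Qed.

Lemma mpart_mpad n la : isPart la -> (size la <= n)%N -> mpart (mpad n la) = la.
Proof.
move=> hp hs; rewrite mpartE mpad_val // filter_cat filter_nz_part //.
rewrite filter_nseq /= cats0; apply: sorted_sort; first exact: geq_transR.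
by case/andP: hp.
Qed.

Lemma mdeg_mpad n la : isPart la -> (size la <= n)%N -> mdeg (mpad n la) = sumn la.
Proof. by move=> hp hs; rewrite -sumn_mpart mpart_mpad. Qed.

Lemma size_part_sumn la : isPart la -> (size la <= sumn la)%N.
Proof.
case/andP=> _; elim: la => //= a l IH /andP[a0 /IH h].
by rewrite -add1n leq_add.
Qed.

Lemma perm_mpad n (m : 'X_{1..n}) :
  perm_eq (multinom_val m : seq nat) (multinom_val (mpad n (mpart m)) : seq nat).
Proof.
rewrite mpad_val ?size_mpart //.
set s := (multinom_val m : seq nat).
have h2 := permEl (perm_filterC (fun x => x != 0%N) s).
rewrite perm_sym in h2; apply: perm_trans h2 _.
have e1 : perm_eq [seq x <- s | x != 0%N] (mpart m).
  by rewrite mpartE perm_sym; apply: permEl; apply: perm_sort.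
have e2 : [seq x <- s | predC (fun x => x != 0%N) x] = nseq (n - size (mpart m)) 0%N.
  apply: (@eq_from_nth _ 0%N).
    rewrite size_nseq mpartE size_sort !size_filter.
    have hc := count_predC (fun x => x != 0%N) s.
    have hsz : size s = n by exact: size_tuple.
    by rewrite hsz in hc; rewrite -[X in (X - _)%N]hc addKn.
  move=> i hi; rewrite nth_nseq if_same.
  have := mem_nth 0%N hi; rewrite mem_filter /= => /andP[].
  by rewrite negbK => /eqP.
by rewrite e2 perm_cat2r.
Qed.

Lemma coef_sym_mpad n (q : {mpoly CC[n]}) (m : 'X_{1..n}) :
  q \is symmetric -> q@_m = q@_(mpad n (mpart m)).
Proof.
move=> /issymP hq.
have /tuple_permP [s hs] := perm_mpad m.
have e : m = [multinom (mpad n (mpart m)) (s i) | i < n].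
  have e' : multinom_val m = [tuple tnth (multinom_val (mpad n (mpart m))) (s i) | i < n].
    by apply: val_inj.
  by apply/mnmP => i; rewrite mnmE /fun_of_multinom e' tnth_mktuple.
by rewrite {1}e -mcoeff_sym hq.
Qed.
Lemma coef_as_sum n (q : {mpoly CC[n]}) (x : 'X_{1..n}) :
  q@_x = \sum_(m <- msupp q) q@_m * (m == x)%:R.
Proof.
rewrite {1}(mpolyE q) raddf_sum; apply: eq_bigr => m _.
by rewrite /= mcoeffZ mcoeffX.
Qed.

Lemma mnm0_eq (m m' : 'X_{1..0}) : m = m'.
Proof. by apply/mnmP => -[]. Qed.

Lemma eps_cf (q : fam) : epsilon q = cf q [::].
Proof.
rewrite /epsilon /cf /= mevalE coef_as_sum; apply: eq_bigr => m _.
by rewrite big_ord0 (mnm0_eq m (mpad 0 [::])) eqxx.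
Qed.

Definition initm n (m : 'X_{1..n.+1}) : 'X_{1..n} := [multinom m (lift ord_max j) | j < n].
Definition extm n (x : 'X_{1..n}) : 'X_{1..n.+1} :=
  [multinom (if unlift ord_max i is Some j then x j else 0%N) | i < n.+1].
Definition tailm n (m : 'X_{1..n.+1}) : 'X_{1..n} := [multinom m (lift ord0 j) | j < n].
Definition consm n (k : nat) (x : 'X_{1..n}) : 'X_{1..n.+1} :=
  [multinom (if unlift ord0 i is Some j then x j else k) | i < n.+1].

Lemma widen_lift n (i : 'I_n) : widen_ord (leqnSn n) i = lift ord_max i.
Proof. by apply: val_inj; rewrite /= /bump leqNgt ltn_ord. Qed.

Lemma initm_ext n (m : 'X_{1..n.+1}) x : m ord_max = 0%N ->
  (initm m == x) = (m == extm x).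
Proof.
move=> h0; apply/eqP/eqP => [<-|->].
  apply/mnmP => i; rewrite mnmE; case: unliftP => [j ->|->] //.
  by rewrite mnmE.
by apply/mnmP => j; rewrite !mnmE liftK.
Qed.

Lemma ext_max n (x : 'X_{1..n}) : extm x ord_max = 0%N.
Proof. by rewrite mnmE unlift_none. Qed.

Lemma drop_last_coef n (q : {mpoly CC[n.+1]}) x : (drop_last q)@_x = q@_(extm x).
Proof.
rewrite /drop_last comp_mpolyEX raddf_sum coef_as_sum.
apply: eq_bigr => m _ /=; rewrite mcoeffZ comp_mpolyX; congr (_ * _).
rewrite big_ord_recr /= tnth_mktuple unlift_none.
under eq_bigr => i _ do rewrite tnth_mktuple widen_lift liftK.
rewrite expr0n.
have -> : \prod_(i < n) ('X_i : {mpoly CC[n]}) ^+ m (lift ord_max i) = 'X_[initm m].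
  by rewrite [RHS]mpolyXE_id; apply: eq_bigr => i _; rewrite mnmE.
case: eqP => h0.
  by rewrite mulr1 mcoeffX -(initm_ext _ h0) eq_sym.
rewrite mulr0 mcoeff0; case: eqP => // hm.
by move: h0; rewrite hm ext_max.
Qed.

Lemma sum_nat_pick (F : nat -> CC) j K : (j < K)%N ->
  \sum_(0 <= k < K) F k * (k == j)%:R = F j.
Proof.
move=> hj; rewrite big_mkord (bigD1 (Ordinal hj)) //= eqxx mulr1 big1 ?addr0 //.
move=> k hk; have -> : (val k == j) = false.
  by apply/negbTE; apply: contra hk => /eqP e; apply/eqP; apply: val_inj.
by rewrite mulr0.
Qed.

Definition lstS n (a : CC) : (n.+1).-tuple {mpoly CC[n]} :=
  [tuple (if unlift ord0 i is Some j then 'X_j else a%:MP) | i < n.+1].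
Arguments lstS : clear implicits.

Lemma consm_eq n (m : 'X_{1..n.+1}) k x :
  (m == consm k x) = (k == m ord0) && (tailm m == x).
Proof.
apply/eqP/andP => [->|[/eqP -> /eqP <-]].
  split; first by rewrite mnmE unlift_none.
  by apply/eqP/mnmP => j; rewrite !mnmE liftK.
apply/mnmP => i; rewrite mnmE; case: unliftP => [j ->|->] //.
by rewrite mnmE.
Qed.

Lemma shift_coef n (q : {mpoly CC[n.+1]}) (a : CC) x K :
  (forall m, m \in msupp q -> (m ord0 < K)%N) ->
  (q \mPo lstS n a)@_x = \sum_(0 <= k < K) a ^+ k * q@_(consm k x).
Proof.
move=> hK.
under [RHS]eq_bigr => k _ do rewrite coef_as_sum big_distrr.
rewrite exchange_big /=.
rewrite comp_mpolyEX raddf_sum.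
apply: eq_big_seq => m hm /=; rewrite mcoeffZ comp_mpolyX.
rewrite big_ord_recl /= tnth_mktuple unlift_none.
under eq_bigr => i _ do rewrite tnth_mktuple liftK.
have -> : \prod_(i < n) ('X_i : {mpoly CC[n]}) ^+ m (lift ord0 i) = 'X_[tailm m].
  by rewrite [RHS]mpolyXE_id; apply: eq_bigr => i _; rewrite mnmE.
rewrite -rmorphXn mul_mpolyC mcoeffZ mcoeffX.
under eq_bigr => k _ do rewrite consm_eq mulrCA.
rewrite -big_distrr /=.
case: eqP => ht /=.
  under eq_bigr => k _ do rewrite andbT.
  by rewrite sum_nat_pick ?hK // mulr1.
rewrite big1 ?mulr0 //= => k _; by rewrite andbF mulr0.
Qed.
Lemma mnm_val n (m : 'X_{1..n}) :
  (multinom_val m : seq nat) = [seq m i | i <- enum 'I_n].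
Proof. by rewrite -[LHS](map_tnth_enum (multinom_val m)). Qed.

Lemma extm_val n (x : 'X_{1..n}) :
  (multinom_val (extm x) : seq nat) = rcons (multinom_val x : seq nat) 0%N.
Proof.
rewrite mnm_val enum_ordSr map_rcons -map_comp mnm_val; congr rcons.
  by apply: eq_map => i /=; rewrite mnmE widen_lift liftK.
by rewrite mnmE unlift_none.
Qed.

Lemma consm_val n k (x : 'X_{1..n}) :
  (multinom_val (consm k x) : seq nat) = k :: (multinom_val x : seq nat).
Proof.
rewrite mnm_val enum_ordSl /= -map_comp mnm_val mnmE unlift_none; congr cons.
by apply: eq_map => i /=; rewrite mnmE liftK.
Qed.

Lemma mpart_extm n (x : 'X_{1..n}) : mpart (extm x) = mpart x.
Proof. by rewrite !mpartE extm_val filter_rcons. Qed.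

Lemma mpart_consm n k (x : 'X_{1..n}) :
  mpart (consm k x) = if k == 0%N then mpart x else ins k (mpart x).
Proof.
rewrite !mpartE consm_val /=; case: eqP => //= _.
rewrite /ins; apply: sort_perm_eq; rewrite perm_cons perm_sym.
by apply: permEl; apply: perm_sort.
Qed.

Lemma mpart_msym n (m : 'X_{1..n}) (s : 'S_n) :
  mpart [multinom m (s i) | i < n] = mpart m.
Proof.
apply: mpart_perm; apply: perm_filter; apply/tuple_permP; exists s.
by [].
Qed.

Lemma lift_max_val n (j : 'I_n) : (lift ord_max j : nat) = j.
Proof. by rewrite /= /bump leqNgt ltn_ord. Qed.

Lemma extm_mpad n la : (size la <= n)%N -> extm (mpad n la) = mpad n.+1 la.
Proof.
move=> hs; apply/mnmP => i; rewrite !mnmE; case: unliftP => [j ->|->].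
  by rewrite mnmE lift_max_val.
by rewrite /= nth_default.
Qed.

Definition isSymF (p : fam) := isSym p.

Lemma isSym_coef (p : fam) : isSym p -> forall n m, (p n)@_m = cf p (mpart m).
Proof.
case=> hs hd _ n m; rewrite (coef_sym_mpad _ (hs n)).
have := size_mpart m; move: (mpart m) => la; clear m.
elim: n => [|n IH] hsz.
  by move: hsz; rewrite leqn0 => /eqP/size0nil ->.
case: (ltngtP (size la) n.+1) => hh.
- by rewrite -(extm_mpad hh) -drop_last_coef hd; exact: IH.
- by move: hh; rewrite ltnNge hsz.
- by rewrite /cf hh.
Qed.

Lemma coef_cf (p : fam) (f : seq nat -> CC) :
  (forall n m, (p n)@_m = f (mpart m)) -> forall la, isPart la -> cf p la = f la.
Proof. by move=> h la hp; rewrite /cf h mpart_mpad. Qed.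

Lemma sym_of_coef (p : fam) (f : seq nat -> CC) (d : nat) :
  (forall n m, (p n)@_m = f (mpart m)) ->
  (forall la, isPart la -> f la != 0 -> (sumn la <= d)%N) -> isSym p.
Proof.
move=> h hd; split.
- move=> n; apply/issymP => s; apply/mpolyP => m.
  by rewrite mcoeff_sym !h mpart_msym.
- by move=> n; apply/mpolyP => x; rewrite drop_last_coef !h mpart_extm.
- exists d => n m; rewrite mcoeff_msupp h => hf.
  by rewrite -sumn_mpart; apply: hd => //; apply: mpart_isPart.
Qed.

Lemma cf_deg (p : fam) d la : isSym p -> deg_le p d -> isPart la -> cf p la != 0 ->
  (sumn la <= d)%N.
Proof.
move=> hs hd hp; rewrite /cf -mcoeff_msupp => /hd.
by rewrite mdeg_mpad.
Qed.
Lemma msym_coef la n (x : 'X_{1..n}) : (monomial_sym la n)@_x = (mpart x == la)%:R.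
Proof.
rewrite /monomial_sym raddf_sum /=.
under eq_bigr => b _ do rewrite mcoeffX.
case: (eqVneq (mpart x) la) => hx.
  have hb : (mdeg x < (sumn la).+1)%N by rewrite -hx sumn_mpart.
  rewrite (bigD1 (BMultinom hb)) /= ?hx ?eqxx // big1 ?addr0 // => b /andP[_ hb'].
  have -> : (bmnm b == x) = false.
    by apply/negbTE; apply: contra hb' => /eqP e; apply/eqP/val_inj.
  by [].
rewrite big1 // => b /eqP hb.
have -> : (bmnm b == x) = false.
  by apply/negbTE; apply/eqP => e; move: hx; rewrite -e hb eqxx.
by [].
Qed.

Lemma deg_of_coef (p : fam) (f : seq nat -> CC) (d : nat) :
  (forall n m, (p n)@_m = f (mpart m)) ->
  (forall la, isPart la -> f la != 0 -> (sumn la <= d)%N) -> deg_le p d.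
Proof.
move=> h hd n m; rewrite mcoeff_msupp h => hf.
by rewrite -sumn_mpart; apply: hd => //; apply: mpart_isPart.
Qed.

Lemma msym_isSym la : isSym (monomial_sym la).
Proof.
apply: (@sym_of_coef _ (fun mu => (mu == la)%:R) (sumn la)).
  by move=> n m; rewrite msym_coef.
move=> mu _ /=; case: (eqVneq mu la) => [->|ne]; first by rewrite leqnn.
by rewrite eqxx.
Qed.

Lemma sum_seq_pick (T : eqType) (L : seq T) (a : T) (G : CC) : uniq L ->
  \sum_(x <- L) (x == a)%:R * G = (a \in L)%:R * G.
Proof.
elim: L => [|x L IH] /=; first by rewrite big_nil mul0r.
case/andP=> hx hu; rewrite big_cons IH // in_cons.
case: (eqVneq x a) => [<-|ne]; last by rewrite /= mul0r add0r.
by rewrite (negPf hx) mul0r addr0.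
Qed.

Lemma all_pos_part la : isPart la -> all (fun k => 0 < k)%N la.
Proof. by case/andP. Qed.

Lemma ins_rem k la mu : isPart la -> sorted geq mu ->
  ((k \in la) && (mu == rem k la)) = (la == ins k mu).
Proof.
move=> /andP[hs _] hmu; apply/andP/eqP => [[hk /eqP ->]|->].
  apply: sorted_perm_eq => //; first by apply: sort_sorted; exact: geq_totalR.
  rewrite perm_sym; apply: perm_trans (permEl (perm_sort _ _)) _.
  by rewrite perm_sym perm_to_rem.
have hk : k \in ins k mu by rewrite mem_sort mem_head.
split => //; apply/eqP; apply: sorted_perm_eq => //.
  apply: subseq_sorted (rem_subseq _ _) _; first exact: geq_transR.
  by apply: sort_sorted; exact: geq_totalR.
have h1 := perm_to_rem hk.
have h2 : perm_eq (ins k mu) (k :: mu) by apply: permEl; apply: perm_sort.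
rewrite -(perm_cons k); apply: (perm_trans (y := ins k mu)) => //.
by rewrite perm_sym.
Qed.

Lemma sumn_ins k mu : sumn (ins k mu) = (k + sumn mu)%N.
Proof. by rewrite /ins (perm_sumn (permEl (perm_sort _ _))). Qed.

Lemma size_ins k mu : size (ins k mu) = (size mu).+1.
Proof. by rewrite /ins size_sort. Qed.

Lemma Dop_coef (p : fam) k n m : isSym p ->
  (Dop k p n)@_m = if k == 0%N then 0 else k`!%:R * cf p (ins k (mpart m)).
Proof.
move=> hsym; rewrite /Dop raddf_sum /=.
set L := undup _.
have hL : forall la, la \in L -> isPart la /\ (size la <= n.+1)%N.
  move=> la; rewrite mem_undup => /mapP [m' _ ->].
  by split; [apply: mpart_isPart | apply: size_mpart].
have e : forall la, la \in L ->
    ((p n.+1)@_(mpad n.+1 la) *: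
       (if k \in la then k`!%:R *: monomial_sym (rem k la) n else 0))@_m
    = (la == ins k (mpart m))%:R * (if k == 0%N then 0 else k`!%:R * cf p (ins k (mpart m))).
  move=> la /hL [hp hs]; rewrite mcoeffZ (isSym_coef hsym) mpart_mpad //.
  case: (boolP (k \in la)) => hk; last first.
    rewrite mcoeff0 mulr0.
    case: eqP => [e|]; last by rewrite mul0r.
    by move: hk; rewrite e /ins mem_sort mem_head.
  rewrite mcoeffZ msym_coef.
  have := ins_rem k hp (andP (mpart_isPart m)).1; rewrite hk /= eq_sym => ->.
  case: eqP => [->|]; last by rewrite !mulr0 mul0r.
  have -> : (k == 0%N) = false.
    apply/negbTE; move: hp => /andP[_ /allP /(_ k hk)].
    by rewrite lt0n.
  by rewrite mul1r mulr1 mulrC.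
rewrite (eq_big_seq _ e) sum_seq_pick ?undup_uniq //.
case: (boolP (ins k (mpart m) \in L)) => hin; first by rewrite mul1r.
rewrite mul0r; case: eqP => // /eqP hk.
case: (eqVneq (cf p (ins k (mpart m))) 0) => [->|hnz]; first by rewrite mulr0.
exfalso; move/negP: hin; apply; rewrite mem_undup; apply/mapP.
have hpi : isPart (ins k (mpart m)) by apply: isPart_ins; rewrite ?lt0n ?mpart_isPart.
have hsz : (size (ins k (mpart m)) <= n.+1)%N by rewrite size_ins ltnS size_mpart.
exists (mpad n.+1 (ins k (mpart m))); last by rewrite mpart_mpad.
by rewrite mcoeff_msupp (isSym_coef hsym) mpart_mpad.
Qed.
Lemma natCC_inj : injective (fun n : nat => (n%:R : CC)).
Proof. move=> m n /= h. apply/eqP. rewrite -(@eqr_nat (Rdefinitions.R[i])). exact/eqP. Qed.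

Lemma fact_neq0 k : (k`!%:R : CC) != 0.
Proof.
apply/eqP => h; have := @natCC_inj k`! 0%N h.
by move=> e; move: (fact_gt0 k); rewrite e.
Qed.

Lemma isSym_deg (p : fam) : isSym p -> exists d, deg_le p d.
Proof. by case. Qed.

Lemma cf_eq0 (p : fam) d la : isSym p -> deg_le p d -> isPart la -> (d < sumn la)%N ->
  cf p la = 0.
Proof.
move=> hs hd hp hlt; apply/eqP; apply: contraTT hlt => h.
by rewrite -leqNgt; apply: (cf_deg hs hd hp h).
Qed.

Lemma Dop_props (p : fam) k d : isSym p -> deg_le p d ->
  isSym (Dop k p) /\ deg_le (Dop k p) d.
Proof.
move=> hs hd.
have hc := fun n m => @Dop_coef p k n m hs.
have hb : forall la, isPart la ->
    (if k == 0%N then 0 else k`!%:R * cf p (ins k la)) != 0 -> (sumn la <= d)%N.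
  move=> la hp; case: (eqVneq k 0%N) => [e|hk] /=; first by rewrite eqxx.
  move=> h; have h' : cf p (ins k la) != 0 by apply: contraNneq h => ->; rewrite mulr0.
  have := cf_deg hs hd (isPart_ins _ _) h'; rewrite lt0n => /(_ hk hp).
  by rewrite sumn_ins => /(leq_trans (leq_addl _ _)).
split; [exact: (sym_of_coef hc hb) | exact: (deg_of_coef hc hb)].
Qed.

Lemma all_pos_cat (s1 s2 : seq nat) : all (fun k => 0 < k)%N s1 -> all (fun k => 0 < k)%N s2 ->
  all (fun k => 0 < k)%N (s1 ++ s2).
Proof. by rewrite all_cat => -> ->. Qed.

Lemma Dpart_props (p : fam) d la : all (fun k => 0 < k)%N la -> isSym p -> deg_le p d ->
  [/\ isSym (Dpart la p), deg_le (Dpart la p) d &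
      forall n m, (Dpart la p n)@_m = cf p (sort geq (la ++ mpart m))].
Proof.
move=> hla hs hd; elim: la hla => [|k la IH] /=.
  move=> _; split => // n m; rewrite (isSym_coef hs) sorted_sort //.
    exact: geq_transR.
  by case/andP: (mpart_isPart m).
case/andP=> hk hla; have [hs' hd' hc'] := IH hla.
have hc : forall n m, (Dpart (k :: la) p n)@_m = cf p (sort geq ((k :: la) ++ mpart m)).
  move=> n m; rewrite /= /famZ mcoeffZ (@Dop_coef _ _ _ _ hs').
  rewrite (negPf (lt0n_neq0 hk)) mulrA mulVf ?fact_neq0 // mul1r.
  rewrite (@coef_cf _ (fun mu => cf p (sort geq (la ++ mu))) hc'); last by apply: isPart_ins => //; apply: mpart_isPart.
  congr (cf p _); apply: sort_perm_eq; rewrite /ins.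
  apply: (perm_trans (y := la ++ k :: mpart m)).
    by rewrite perm_cat2l; apply: permEl; apply: perm_sort.
  by rewrite -cat1s perm_catCA.
have hb : forall mu, isPart mu -> cf p (sort geq ((k :: la) ++ mu)) != 0 -> (sumn mu <= d)%N.
  move=> mu hmu h.
  have hp : isPart (sort geq ((k :: la) ++ mu)).
    by apply: isPart_sort; rewrite all_cat /= hk hla; case/andP: hmu.
  have := cf_deg hs hd hp h; rewrite (perm_sumn (permEl (perm_sort _ _))) sumn_cat.
  by move/(leq_trans (leq_addl _ _)).
split; [exact: (sym_of_coef hc hb) | exact: (deg_of_coef hc hb) | exact: hc].
Qed.

Lemma PN_isPart N la : la \in partitions_upto N -> isPart la.
Proof. by rewrite mem_undup => /mapP [m _ ->]; apply: mpart_isPart. Qed.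

Lemma mem_PN N la : isPart la -> (sumn la <= N)%N -> la \in partitions_upto N.
Proof.
move=> hp hN.
have hs : (size la <= N)%N := leq_trans (size_part_sumn hp) hN.
have hb : (mdeg (mpad N la) < N.+1)%N by rewrite mdeg_mpad.
rewrite mem_undup; apply/mapP; exists (BMultinom hb); first by rewrite mem_enum.
by rewrite /= mpart_mpad.
Qed.

Lemma poly_vanish (u : nat -> CC) K :
  (forall a : CC, \sum_(0 <= k < K) a ^+ k * u k = 0) -> forall k, (k < K)%N -> u k = 0.
Proof.
move=> h k hk.
pose P := \poly_(i < K) u i.
have hP : P = 0.
  apply/eqP; apply: contraT => nz.
  have hall : all (root P) [seq (i%:R : CC) | i <- iota 0 K.+1].
    apply/allP => a _; rewrite /root horner_poly; apply/eqP.
    rewrite -[RHS](h a) big_mkord; apply: eq_bigr => i _; by rewrite mulrC.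
  have hu : uniq [seq (i%:R : CC) | i <- iota 0 K.+1].
    by rewrite map_inj_uniq ?iota_uniq //; exact: natCC_inj.
  have := max_poly_roots nz hall hu; rewrite size_map size_iota.
  by rewrite ltnNge ltnW // ltnS size_poly.
by have := congr1 (fun q : {poly CC} => q`_k) hP; rewrite coef_poly hk coef0.
Qed.
Lemma famP (p q : fam) : (forall n m, (p n)@_m = (q n)@_m) -> p = q.
Proof. by move=> h; apply: functional_extensionality_dep => n; apply/mpolyP. Qed.

Definition fsum (I : Type) (s : seq I) (F : I -> fam) : fam :=
  foldr (fun i acc => famD (F i) acc) fam0 s.

Lemma fsumE (I : Type) (s : seq I) (F : I -> fam) n : fsum s F n = \sum_(i <- s) F i n.
Proof. by elim: s => [|i s IH] /=; rewrite ?big_nil ?big_cons // /famD IH. Qed.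

Lemma isSym_famD p q : isSym p -> isSym q -> isSym (famD p q).
Proof.
move=> hp hq; have [dp hdp] := isSym_deg hp; have [dq hdq] := isSym_deg hq.
have hc : forall n m, (famD p q n)@_m = (fun mu => cf p mu + cf q mu) (mpart m).
  by move=> n m; rewrite /famD mcoeffD !(isSym_coef hp, isSym_coef hq).
apply: (@sym_of_coef _ (fun mu => cf p mu + cf q mu) (maxn dp dq) hc) => mu hmu.
case: (eqVneq (cf p mu) 0) => hp0.
  rewrite hp0 add0r => h; rewrite leq_max (cf_deg hq hdq hmu h) orbT //.
move=> _; by rewrite leq_max (cf_deg hp hdp hmu hp0).
Qed.

Lemma isSym_famZ c p : isSym p -> isSym (famZ c p).
Proof.
move=> hp; have [dp hdp] := isSym_deg hp.
have hc : forall n m, (famZ c p n)@_m = (fun mu => c * cf p mu) (mpart m).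
  by move=> n m; rewrite /famZ mcoeffZ (isSym_coef hp).
apply: (@sym_of_coef _ (fun mu => c * cf p mu) dp hc) => mu hmu h.
apply: (cf_deg hp hdp hmu); apply: contraNneq h => ->; by rewrite mulr0.
Qed.

Lemma isSym_fam0 : isSym fam0.
Proof.
have hc : forall n m, (fam0 n)@_m = (fun mu : seq nat => (0 : CC)) (mpart m).
  by move=> n m; rewrite /fam0 mcoeff0.
by apply: (@sym_of_coef _ (fun mu => 0) 0%N hc) => mu _; rewrite eqxx.
Qed.

Lemma isSym_fsum (I : Type) (s : seq I) (F : I -> fam) :
  (forall i, isSym (F i)) -> isSym (fsum s F).
Proof.
move=> h; elim: s => [|i s IH] /=; first exact: isSym_fam0.
by apply: isSym_famD.
Qed.

Lemma eps_famD p q : epsilon (famD p q) = epsilon p + epsilon q.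
Proof. by rewrite /epsilon /famD mevalD. Qed.
Lemma eps_famZ c p : epsilon (famZ c p) = c * epsilon p.
Proof. by rewrite /epsilon /famZ mevalZ. Qed.
Lemma eps_fam0 : epsilon fam0 = 0.
Proof. by rewrite /epsilon /fam0 meval0. Qed.
Lemma eps_fsum (I : Type) (s : seq I) (F : I -> fam) :
  epsilon (fsum s F) = \sum_(i <- s) epsilon (F i).
Proof.
elim: s => [|i s IH] /=; first by rewrite big_nil eps_fam0.
by rewrite big_cons eps_famD IH.
Qed.

Lemma famZ0 p : famZ 0 p = fam0.
Proof. by apply: famP => n m; rewrite /famZ scale0r. Qed.

Section Op.
Variable theta : fam -> fam.
Hypothesis theta_sym : forall p, isSym p -> isSym (theta p).
Hypothesis theta_add : forall p q, isSym p -> isSym q ->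
                 theta (famD p q) = famD (theta p) (theta q).
Hypothesis theta_scale : forall (c : CC) p, isSym p -> theta (famZ c p) = famZ c (theta p).
Hypothesis theta_shift : forall (a : CC) p, isSym p -> theta (shiftE a p) = shiftE a (theta p).

Lemma T0 : theta fam0 = fam0.
Proof. by rewrite -(famZ0 fam0) theta_scale ?famZ0 //; exact: isSym_fam0. Qed.

Lemma T_fsum (I : Type) (s : seq I) (c : I -> CC) (G : I -> fam) :
  (forall i, isSym (G i)) ->
  theta (fsum s (fun i => famZ (c i) (G i))) = fsum s (fun i => famZ (c i) (theta (G i))).
Proof.
move=> h; elim: s => [|i s IH] /=; first exact: T0.
rewrite theta_add ?theta_scale ?IH //; first exact: isSym_famZ.
by apply: isSym_fsum => j; apply: isSym_famZ.
Qed.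

Lemma famDE p q n : famD p q n = p n + q n. Proof. by []. Qed.
Lemma famZE c p n : famZ c p n = c *: p n. Proof. by []. Qed.

Lemma mnm0_le_mdeg n (m : 'X_{1..n.+1}) : (m ord0 <= mdeg m)%N.
Proof. by rewrite mdegE (bigD1 ord0) //= leq_addr. Qed.

Lemma shift_decomp r d K a : isSym r -> deg_le r d -> (d <= K)%N ->
  shiftE a r = famD r (fsum (index_iota 0 K.+1)
                         (fun k => famZ (a ^+ k / k`!%:R) (Dop k r))).
Proof.
move=> hs hd hK; apply: famP => n x.
have -> : (shiftE a r n)@_x = \sum_(0 <= k < K.+1) a ^+ k * (r n.+1)@_(consm k x).
  apply: shift_coef => m hm.
  by rewrite ltnS (leq_trans (mnm0_le_mdeg m)) // (leq_trans (hd _ _ hm)).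
rewrite /famD fsumE mcoeffD raddf_sum /=.
rewrite !big_nat_recl // expr0 mul1r (isSym_coef hs) mpart_consm eqxx.
rewrite /famZ mcoeffZ (@Dop_coef _ _ _ _ hs) eqxx mulr0 add0r -(isSym_coef hs).
congr (_ + _); apply: eq_bigr => i _.
rewrite mcoeffZ (@Dop_coef _ _ _ _ hs) (isSym_coef hs) mpart_consm /=.
by rewrite mulrA divfK ?fact_neq0.
Qed.

Lemma T_Dop q k : isSym q -> theta (Dop k q) = Dop k (theta q).
Proof.
move=> hq; have [dq hdq] := isSym_deg hq; have hTq := theta_sym hq.
have [dt hdt] := isSym_deg hTq.
pose K := maxn dq dt.
have hDq : forall j, isSym (Dop j q) by move=> j; exact: (Dop_props j hq hdq).1.
have hDt : forall j, isSym (Dop j (theta q)) by move=> j; exact: (Dop_props j hTq hdt).1.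
case: (leqP k K) => hk.
  apply: famP => n x.
  pose u j := ((theta (Dop j q) n)@_x - (Dop j (theta q) n)@_x) / j`!%:R.
  have hu : forall a, \sum_(0 <= j < K.+1) a ^+ j * u j = 0.
    move=> a; have := congr1 (fun f : fam => (f n)@_x) (theta_shift a hq).
    rewrite (shift_decomp a hq hdq (leq_maxl dq dt)) (shift_decomp a hTq hdt (leq_maxr dq dt)).
    rewrite theta_add //; last by apply: isSym_fsum => j; apply: isSym_famZ.
    rewrite T_fsum // /famD !fsumE !mcoeffD => /addrI.
    rewrite !raddf_sum => /eqP; rewrite -subr_eq0 -sumrB => /eqP h.
    rewrite -[RHS]h; apply: eq_bigr => j _ /=; rewrite !famZE !mcoeffZ /u.
    by ring.
  have := poly_vanish hu hk; rewrite /u => /eqP.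
  by rewrite mulf_eq0 invr_eq0 (negPf (fact_neq0 k)) orbF subr_eq0 => /eqP.
have hz : forall r d, isSym r -> deg_le r d -> (d <= K)%N -> Dop k r = fam0.
  move=> r d hr hdr hdK; apply: famP => n m; rewrite (@Dop_coef _ _ _ _ hr) /fam0 mcoeff0.
  have -> : (k == 0%N) = false by apply/negbTE; rewrite -lt0n (leq_ltn_trans _ hk).
  rewrite (cf_eq0 hr hdr) ?mulr0 //.
    by apply: isPart_ins; [rewrite (leq_ltn_trans _ hk) | apply: mpart_isPart].
  by rewrite sumn_ins (leq_trans _ (leq_addr _ _)) // (leq_ltn_trans hdK hk).
rewrite (hz q dq) ?(hz (theta q) dt) ?T0 ?leq_maxl ?leq_maxr //.
Qed.

Lemma T_Dpart la q : all (fun k => 0 < k)%N la -> isSym q ->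
  theta (Dpart la q) = Dpart la (theta q).
Proof.
move=> hla hq; have [d hd] := isSym_deg hq.
elim: la hla => [|k la IH] //= /andP[hk hla].
have [hs hds _] := Dpart_props hla hq hd.
rewrite theta_scale; last exact: (Dop_props k hs hds).1.
by rewrite T_Dop // IH.
Qed.

Lemma eps_T p N : isSym p -> deg_le p N ->
  epsilon (theta p) =
  \sum_(la <- partitions_upto N) epsilon (theta (monomial_sym la)) * cf p la.
Proof.
move=> hs hd.
have E : p = fsum (partitions_upto N) (fun la => famZ (cf p la) (monomial_sym la)).
  apply: famP => n m; rewrite fsumE raddf_sum (isSym_coef hs).
  have e : forall la, la \in partitions_upto N ->
      (famZ (cf p la) (monomial_sym la) n)@_m = (la == mpart m)%:R * cf p (mpart m).
    move=> la _; rewrite famZE mcoeffZ msym_coef eq_sym.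
    by case: eqP => [->|_]; rewrite ?mulr1 ?mul1r ?mulr0 ?mul0r.
  rewrite (eq_big_seq _ e) sum_seq_pick ?undup_uniq //.
  case: (boolP (mpart m \in partitions_upto N)) => hin; first by rewrite mul1r.
  rewrite mul0r; apply/eqP; apply: contraNT hin => h.
  by apply: mem_PN; [apply: mpart_isPart | apply: (cf_deg hs hd (mpart_isPart m))].
rewrite {1}E T_fsum; last by move=> la; apply: msym_isSym.
rewrite eps_fsum; apply: eq_bigr => la _; by rewrite eps_famZ mulrC.
Qed.

Lemma main_aux (p : fam) (N : nat) : isSym p -> deg_le p N ->
    forall n : nat,
      theta p n =
      \sum_(la <- partitions_upto N)
         epsilon (theta (monomial_sym la)) *: Dpart la p n.
Proof.
move=> hs hd n; apply/mpolyP => x.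
have hTs := theta_sym hs; have [dt hdt] := isSym_deg hTs.
set nu := mpart x.
have hnu : isPart nu by apply: mpart_isPart.
have hnupos : all (fun k => 0 < k)%N nu by case/andP: hnu.
rewrite (isSym_coef hTs) -/nu.
have [hs1 hd1 hc1] := Dpart_props hnupos hTs hdt.
have e1 : cf (theta p) nu = cf (Dpart nu (theta p)) [::].
  rewrite (@coef_cf _ (fun mu => cf (theta p) (sort geq (nu ++ mu))) hc1) //.
  by rewrite cats0 sorted_sort //; [exact: geq_transR | case/andP: hnu].
have [hs2 hd2 hc2] := Dpart_props hnupos hs hd.
rewrite e1 -T_Dpart // -eps_cf (eps_T hs2 hd2).
rewrite raddf_sum; apply: eq_big_seq => la hla /=.
have hlap := PN_isPart hla.
have hlapos : all (fun k => 0 < k)%N la by case/andP: hlap.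
have [_ _ hc3] := Dpart_props hlapos hs hd.
rewrite mcoeffZ hc3 (@coef_cf _ (fun mu => cf p (sort geq (nu ++ mu))) hc2) //.
by congr (_ * cf p _); apply: sort_perm_eq; rewrite perm_catC.
Qed.

End Op.

Theorem mainTheorem9 (theta : fam -> fam)
  (theta_sym : forall p, isSym p -> isSym (theta p))
  (theta_add : forall p q, isSym p -> isSym q ->
                 theta (famD p q) = famD (theta p) (theta q))
  (theta_scale : forall (c : CC) p, isSym p -> theta (famZ c p) = famZ c (theta p))
  (theta_shift : forall (a : CC) p, isSym p -> theta (shiftE a p) = shiftE a (theta p)) :
  forall (p : fam) (N : nat), isSym p -> deg_le p N ->
    forall n : nat,
      theta p n =
      \sum_(la <- partitions_upto N)
         epsilon (theta (monomial_sym la)) *: Dpart la p n.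
Proof.
move=> p N hs hd n.
exact: (main_aux theta_sym theta_add theta_scale theta_shift hs hd n).
Qed.
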